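(* Let $\mathbf z(k)=\mathbf y-\mathbf u(k)$. For every $k\ge0$ and $\eta>0$, entrywise, $$\big(\mathbf I-2\eta(\tilde{\mathbf H}^+(k)+\mathbf H^-(k))\mathbf P\big)\mathbf z(k)\ \le\ \mathbf z(k+1)\ \le\ \big(\mathbf I-2\eta(\mathbf H^+(k)+\tilde{\mathbf H}^-(k))\mathbf P\big)\mathbf z(k).$$
   Context: Setup: distinct $\mathbf x_1,\dots,\mathbf x_n\in\mathbb S^{d-1}$, labels $\mathbf y\in\mathbb R^n$; network $\mathcal N(\mathbf x)=\frac1{\sqrt m}\sum_{r=1}^ma_r\mathrm{ReLU}(\mathbf w_r^\top\mathbf x+b_r)$ with fixed $a_r\in\{\pm1\}$; $\mathbf P$ symmetric positive definite; gradient descent with step $\eta$ on $\mathbf w_r,b_r$ for the loss $\frac12(\mathbf y-\mathbf u)^\top\mathbf P(\mathbf y-\mathbf u)$, using $\mathrm{ReLU}'(t)=\mathbb 1_{\{t\ge0\}}$; $\mathbf u(k)=(\mathcal N_k(\mathbf x_i))_i$ after $k$ steps. Write $\tilde{\mathbf x}_i=\frac1{\sqrt2}(\mathbf x_i,1)\in\mathbb R^{d+1}$, $\tilde{\mathbf w}_r(k)=(\mathbf w_r(k),b_r(k))\in\mathbb R^{d+1}$, $\mathcal A=\{r:a_r=1\}$, $\mathcal B=\{r:a_r=-1\}$. Define $H^\pm_{ij}(k)=\frac1m\tilde{\mathbf x}_i^\top\tilde{\mathbf x}_j\sum_{r\in\mathcal A\text{ (resp. }\mathcal B)}\mathbb 1_{\{\tilde{\mathbf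 w}_r(k)^\top\tilde{\mathbf x}_i\ge0,\ \tilde{\mathbf w}_r(k)^\top\tilde{\mathbf x}_j\ge0\}}$ ($+$ with $\mathcal A$, $-$ with $\mathcal B$), and $\tilde H^\pm_{ij}(k)=\frac1m\tilde{\mathbf x}_i^\top\tilde{\mathbf x}_j\sum_{r\in\mathcal A\text{ (resp. }\mathcal B)}\mathbb 1_{\{\tilde{\mathbf w}_r(k+1)^\top\tilde{\mathbf x}_i\ge0,\ \tilde{\mathbf w}_r(k)^\top\tilde{\mathbf x}_j\ge0\}}$. *)

(* Defs.v *)
From HB Require Import structures.
From mathcomp Require Import all_boot all_order all_algebra.
Set Implicit Arguments. Unset Strict Implicit. Unset Printing Implicit Defensive.
Import Order.TTheory GRing.Theory Num.Theory.
Local Open Scope ring_scope.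

Section TwoLayer.
Variables (R : rcfType) (n m d : nat).

Definition dotv (k : nat) (u v : 'rV[R]_k) : R := \sum_(l < k) u 0 l * v 0 l.

Definition relu (t : R) : R := if 0 <= t then t else 0.
Definition relu' (t : R) : R := if 0 <= t then 1 else 0.

Definition params := (('I_m -> 'rV[R]_d) * ('I_m -> R))%type.

Variables (a : 'I_m -> R) (x : 'I_n -> 'rV[R]_d) (y : 'cV[R]_n)
          (P : 'M[R]_n) (eta : R).

Definition net (th : params) (v : 'rV[R]_d) : R :=
  (Num.sqrt m%:R)^-1 * \sum_(r < m) a r * relu (dotv (th.1 r) v + th.2 r).

Definition outputs (th : params) : 'cV[R]_n := \col_(i < n) net th (x i).

(* dL/du_i for L = 1/2 (y-u)^T P (y-u) : the i-th entry of -(1/2)(P+P^T)(y-u) *)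
Definition dLdu (th : params) : 'cV[R]_n :=
  - ((2%:R)^-1 *: ((P + P^T) *m (y - outputs th))).

Definition grad_w (th : params) (r : 'I_m) : 'rV[R]_d :=
  \sum_(i < n) (dLdu th i 0 * ((Num.sqrt m%:R)^-1 * a r
                  * relu' (dotv (th.1 r) (x i) + th.2 r))) *: x i.
Definition grad_b (th : params) (r : 'I_m) : R :=
  \sum_(i < n) dLdu th i 0 * ((Num.sqrt m%:R)^-1 * a r
                  * relu' (dotv (th.1 r) (x i) + th.2 r)).

Definition gd_step (th : params) : params :=
  (fun r => th.1 r - eta *: grad_w th r, fun r => th.2 r - eta * grad_b th r).

Fixpoint gd (th0 : params) (k : nat) : params :=
  if k is k'.+1 then gd_step (gd th0 k') else th0.

Definition u_at (th0 : params) (k : nat) : 'cV[R]_n := outputs (gd th0 k).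
Definition z_at (th0 : params) (k : nat) : 'cV[R]_n := y - u_at th0 k.

Definition xt (i : 'I_n) : 'rV[R]_(d + 1) :=
  (Num.sqrt 2%:R)^-1 *: row_mx (x i) (const_mx 1).
Definition wt (th0 : params) (k : nat) (r : 'I_m) : 'rV[R]_(d + 1) :=
  row_mx ((gd th0 k).1 r) (const_mx ((gd th0 k).2 r)).

(* H^{+}(k) (s = 1, set A) and H^{-}(k) (s = -1, set B) *)
Definition Hmat (s : R) (th0 : params) (k : nat) : 'M[R]_n :=
  \matrix_(i < n, j < n)
    ((m%:R)^-1 * dotv (xt i) (xt j) *
     \sum_(r < m | a r == s)
        (if (0 <= dotv (wt th0 k r) (xt i)) && (0 <= dotv (wt th0 k r) (xt j))
         then 1 else 0)).

Definition Htmat (s : R) (th0 : params) (k : nat) : 'M[R]_n :=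
  \matrix_(i < n, j < n)
    ((m%:R)^-1 * dotv (xt i) (xt j) *
     \sum_(r < m | a r == s)
        (if (0 <= dotv (wt th0 k.+1 r) (xt i)) && (0 <= dotv (wt th0 k r) (xt j))
         then 1 else 0)).

End TwoLayer.

(* Main.v *)
Require Import Defs.
From HB Require Import structures.
From mathcomp Require Import all_boot all_order all_algebra.
From mathcomp Require Import ring lra.
Import Order.TTheory GRing.Theory Num.Theory.
Local Open Scope ring_scope.

Section Aux.
Variable R : rcfType.

Lemma dotvC k (u v : 'rV[R]_k) : dotv u v = dotv v u.
Proof. by rewrite /dotv; apply: eq_bigr => l _; rewrite mulrC. Qed.

Lemma dotvDl k (u w v : 'rV[R]_k) : dotv (u + w) v = dotv u v + dotv w v.
Proof. by rewrite /dotv -big_split; apply: eq_bigr => l _; rewrite !mxE mulrDl. Qed.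

Lemma dotvNl k (u v : 'rV[R]_k) : dotv (- u) v = - dotv u v.
Proof. by rewrite /dotv -sumrN; apply: eq_bigr => l _; rewrite !mxE mulNr. Qed.

Lemma dotvZl k s (u v : 'rV[R]_k) : dotv (s *: u) v = s * dotv u v.
Proof. by rewrite /dotv mulr_sumr; apply: eq_bigr => l _; rewrite !mxE mulrA. Qed.

Lemma dotvZr k s (u v : 'rV[R]_k) : dotv u (s *: v) = s * dotv u v.
Proof. by rewrite dotvC dotvZl dotvC. Qed.

Lemma dotv_suml k p (F : 'I_p -> 'rV[R]_k) v :
  dotv (\sum_(j < p) F j) v = \sum_(j < p) dotv (F j) v.
Proof.
rewrite /dotv (exchange_big) /=; apply: eq_bigr => l _.
by rewrite summxE mulr_suml.
Qed.

Lemma dotv_row k1 (u1 v1 : 'rV[R]_k1) (b c : R) :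
  dotv (row_mx u1 (const_mx b : 'rV_1)) (row_mx v1 (const_mx c : 'rV_1)) = dotv u1 v1 + b * c.
Proof.
rewrite /dotv big_split_ord /=; congr (_ + _).
  by apply: eq_bigr => l _; rewrite !row_mxEl.
by rewrite big_ord1 !row_mxEr !mxE.
Qed.

Lemma relu_bounds (t t' : R) :
  relu' t * (t' - t) <= relu t' - relu t <= relu' t' * (t' - t).
Proof.
rewrite /relu /relu'.
case: (lerP 0 t) => Ht; case: (lerP 0 t') => Ht'; apply/andP; split; lra.
Qed.

Lemma one_neq_m1 : (1 == -1 :> R) = false.
Proof. by apply/eqP => h; lra. Qed.

End Aux.
Theorem lemma1 (R : rcfType) (n m d : nat) (hm : (0 < m)%N)
  (x : 'I_n -> 'rV[R]_d)
  (hx_sphere : forall i, dotv (x i) (x i) = 1)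
  (hx_distinct : injective x)
  (y : 'cV[R]_n)
  (a : 'I_m -> R) (ha : forall r, a r = 1 \/ a r = -1)
  (P : 'M[R]_n) (hPsym : P^T = P)
  (hPpd : forall v : 'cV[R]_n, v != 0 -> 0 < (v^T *m P *m v) 0 0)
  (th0 : params R m d) (eta : R) (heta : 0 < eta) (k : nat) :
  let z := z_at a x y P eta th0 in
  let Hp := Hmat a x y P eta 1 th0 k in
  let Hm := Hmat a x y P eta (-1) th0 k in
  let Htp := Htmat a x y P eta 1 th0 k in
  let Htm := Htmat a x y P eta (-1) th0 k in
  forall i : 'I_n,
    ((1%:M - (2%:R * eta) *: ((Htp + Hm) *m P)) *m z k) i 0 <= z k.+1 i 0 /\
    z k.+1 i 0 <= ((1%:M - (2%:R * eta) *: ((Hp + Htm) *m P)) *m z k) i 0.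
Proof.
move=> z Hp Hm Htp Htm i.
set th := gd a x y P eta th0 k.
have Eth' : gd a x y P eta th0 k.+1 = gd_step a x y P eta th by [].
set c := (Num.sqrt (m%:R : R))^-1.
have c2 : c * c = (m%:R)^-1.
  by rewrite /c -invfM -expr2 sqr_sqrtr // ler0n.
have c0 : 0 <= c by rewrite /c invr_ge0 sqrtr_ge0.
set v := P *m z k.
have EdL : dLdu a x y P th = - v.
  rewrite /dLdu /v hPsym -/th mulmxDl -mulr2n -scaler_nat scalerA mulVf ?scale1r //.
  by rewrite pnatr_eq0.
pose t r l := dotv (th.1 r) (x l) + th.2 r.
pose t' r l := dotv ((gd a x y P eta th0 k.+1).1 r) (x l) + (gd a x y P eta th0 k.+1).2 r.
pose D j l := dotv (x j) (x l) + 1.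
pose S r l := \sum_(j < n) v j 0 * relu' (t r j) * D j l.
have Et' : forall r l, t' r l - t r l = eta * c * a r * S r l.
  move=> r l; rewrite /t' /t Eth' /gd_step /= dotvDl dotvNl dotvZl /grad_w dotv_suml.
  under eq_bigr do rewrite dotvZl.
  rewrite /grad_b EdL -/c.
  have hAB : \sum_(j < n) ((- v) j 0 * (c * a r * relu' (dotv (th.1 r) (x j) + th.2 r))) *
       dotv (x j) (x l) + \sum_(j < n) (- v) j 0 * (c * a r * relu' (dotv (th.1 r) (x j) + th.2 r))
     = - (c * a r * S r l).
    rewrite -big_split /S mulr_sumr -sumrN; apply: eq_bigr => j _; rewrite /= [(- v) _ _]mxE /D /t; ring.
  have -> : eta * c * a r * S r l = - eta * (- (c * a r * S r l)) by ring.
  rewrite -hAB; ring.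
have Ez : z k.+1 i 0 = z k i 0 - c * \sum_(r < m) a r * (relu (t' r i) - relu (t r i)).
  rewrite /z /z_at /u_at /outputs !mxE /net -/c -/th /t' /t.
  have -> : forall F G : 'I_m -> R, \sum_(r < m) a r * (F r - G r) =
      \sum_(r < m) a r * F r - \sum_(r < m) a r * G r.
    by move=> F G; rewrite -sumrB; apply: eq_bigr => r _; rewrite mulrBr.
  ring.
have Emat : forall (M : 'M[R]_n) s, ((1%:M - s *: (M *m P)) *m z k) i 0 =
    z k i 0 - s * \sum_(j < n) M i j * v j 0.
  move=> M s; rewrite mulmxBl mul1mx -scalemxAl -mulmxA -/v.
  have E : forall (A B : 'M[R]_(n,1)) sc, (A - sc *: B) i 0 = A i 0 - sc * B i 0 by move=> *; rewrite !mxE.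
  by rewrite E [(M *m v) i 0]mxE.
set s2 := (Num.sqrt (2%:R : R))^-1.
have s2p : 0 < s2 by rewrite /s2 invr_gt0 sqrtr_gt0 ltr0n.
have Edwk : forall r l, dotv (wt a x y P eta th0 k r) (xt x l) = s2 * t r l.
  by move=> r l; rewrite /wt /xt dotvZr dotv_row mulr1.
have Edwk1 : forall r l, dotv (wt a x y P eta th0 k.+1 r) (xt x l) = s2 * t' r l.
  by move=> r l; rewrite /wt /xt dotvZr dotv_row mulr1.
have Edx : forall j l, dotv (xt x j) (xt x l) = 2%:R^-1 * D j l.
  move=> j l; rewrite /xt dotvZl dotvZr dotv_row mulr1 mulrA -invfM -expr2 sqr_sqrtr //.
have ind : forall A B, (if (0 <= s2 * A) && (0 <= s2 * B) then 1 else 0) = relu' A * relu' B.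
  move=> A B; rewrite !pmulr_rge0 // /relu'.
  by case: (0 <= A); case: (0 <= B); rewrite ?mulr1 ?mulr0 ?mul0r.
have EH : forall s, \sum_(j < n) Hmat a x y P eta s th0 k i j * v j 0 =
    (m%:R)^-1 * 2%:R^-1 * \sum_(r < m | a r == s) relu' (t r i) * S r i.
  move=> s.
  rewrite (eq_bigr (fun j => \sum_(r < m | a r == s)
     (m%:R)^-1 * 2%:R^-1 * (relu' (t r i) * (v j 0 * relu' (t r j) * D j i)))); last first.
    move=> j _; rewrite mxE Edx -[_ * _ * v j 0]mulrA mulr_suml mulr_sumr; apply: eq_bigr => r _.
    rewrite !Edwk ind /D [dotv (x i) (x j)]dotvC; ring.
  rewrite exchange_big /= mulr_sumr; apply: eq_bigr => r _.
  by rewrite /S !mulr_sumr.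
have EHt : forall s, \sum_(j < n) Htmat a x y P eta s th0 k i j * v j 0 =
    (m%:R)^-1 * 2%:R^-1 * \sum_(r < m | a r == s) relu' (t' r i) * S r i.
  move=> s.
  rewrite (eq_bigr (fun j => \sum_(r < m | a r == s)
     (m%:R)^-1 * 2%:R^-1 * (relu' (t' r i) * (v j 0 * relu' (t r j) * D j i)))); last first.
    move=> j _; rewrite mxE Edx -[_ * _ * v j 0]mulrA mulr_suml mulr_sumr; apply: eq_bigr => r _.
    rewrite Edwk1 Edwk ind /D [dotv (x i) (x j)]dotvC; ring.
  rewrite exchange_big /= mulr_sumr; apply: eq_bigr => r _.
  by rewrite /S !mulr_sumr.
have h1 : (1 == -1 :> R) = false by apply: one_neq_m1.
have h1' : (-1 == 1 :> R) = false by rewrite eq_sym.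
have Split : forall F : 'I_m -> R, \sum_(r < m) F r =
    \sum_(r < m | a r == 1) F r + \sum_(r < m | a r == -1) F r.
  move=> F; rewrite (bigID (fun r => a r == 1)) /=; congr (_ + _).
  by apply: eq_bigl => r; case: (ha r) => ->; rewrite ?eqxx ?h1 ?h1'.
have Esum : forall (M1 M2 : 'M[R]_n), \sum_(j < n) (M1 + M2) i j * v j 0 =
    \sum_(j < n) M1 i j * v j 0 + \sum_(j < n) M2 i j * v j 0.
  by move=> M1 M2; rewrite -big_split; apply: eq_bigr => j _; rewrite mxE mulrDl.
have two : (2%:R : R) != 0 by rewrite pnatr_eq0.
have fold2 : forall (sg : R) (F : 'I_m -> R),
    2%:R * eta * ((m%:R)^-1 * 2%:R^-1 * \sum_(r < m | a r == sg) F r) =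
    \sum_(r < m | a r == sg) eta * (m%:R)^-1 * F r.
  move=> sg F; rewrite !mulr_sumr; apply: eq_bigr => r _. field; by rewrite pnatr_eq0 -lt0n.
rewrite Ez !Emat !Esum /Htp /Hm /Hp /Htm EHt EH EHt EH Split.
split.
- rewrite [2%:R * eta * _]mulrDr [c * _]mulrDr !fold2.
  have L1 : c * \sum_(r < m | a r == 1) a r * (relu (t' r i) - relu (t r i)) <=
      \sum_(r < m | a r == 1) eta * (m%:R)^-1 * (relu' (t' r i) * S r i).
    rewrite mulr_sumr; apply: ler_sum => r /eqP ar.
    move: (@relu_bounds R (t r i) (t' r i)); rewrite Et' ar => /andP[_ H].
    rewrite mul1r -c2; apply: le_trans (ler_wpM2l c0 H) _.
    rewrite le_eqVlt; apply/orP; left; apply/eqP; ring.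
  have L2 : c * \sum_(r < m | a r == -1) a r * (relu (t' r i) - relu (t r i)) <=
      \sum_(r < m | a r == -1) eta * (m%:R)^-1 * (relu' (t r i) * S r i).
    rewrite mulr_sumr; apply: ler_sum => r /eqP ar.
    move: (@relu_bounds R (t r i) (t' r i)); rewrite Et' ar => /andP[H _].
    rewrite -lerN2 in H.
    rewrite -c2; apply: (@le_trans _ _ (c * - (relu' (t r i) * (eta * c * -1 * S r i)))).
      by rewrite mulN1r; apply: ler_wpM2l.
    rewrite le_eqVlt; apply/orP; left; apply/eqP; ring.
  lra.
- rewrite [2%:R * eta * _]mulrDr [c * _]mulrDr !fold2.
  have L1 : \sum_(r < m | a r == 1) eta * (m%:R)^-1 * (relu' (t r i) * S r i) <=
      c * \sum_(r < m | a r == 1) a r * (relu (t' r i) - relu (t r i)).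
    rewrite mulr_sumr; apply: ler_sum => r /eqP ar.
    move: (@relu_bounds R (t r i) (t' r i)); rewrite Et' ar => /andP[H _].
    rewrite mul1r -c2; apply: le_trans (ler_wpM2l c0 H).
    rewrite le_eqVlt; apply/orP; left; apply/eqP; ring.
  have L2 : \sum_(r < m | a r == -1) eta * (m%:R)^-1 * (relu' (t' r i) * S r i) <=
      c * \sum_(r < m | a r == -1) a r * (relu (t' r i) - relu (t r i)).
    rewrite mulr_sumr; apply: ler_sum => r /eqP ar.
    move: (@relu_bounds R (t r i) (t' r i)); rewrite Et' ar => /andP[_ H].
    rewrite -lerN2 in H.
    rewrite -c2; apply: (@le_trans _ _ (c * - (relu' (t' r i) * (eta * c * -1 * S r i)))).
      rewrite le_eqVlt; apply/orP; left; apply/eqP; ring.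
    by rewrite mulN1r; apply: ler_wpM2l.
  lra.
Qed.
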